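(* Let $P$ be a positive, completely labelled causal logic program, let $p$ be an atom, let $\Pi_p$ be the set of non-redundant proofs of $p$ with respect to $P$, and let $I$ be the least causal model of $P$. Then for every causal graph $G$: $G\in\{\mathrm{graph}(\pi)\mid\pi\in\Pi_p\}$ if and only if $G$ is a $\le$-maximal element of $I(p)$.
   Context: Causal graphs, causal values, causal programs, causal models and least models are as follows. Causal graphs over a label set $Lb$: graphs $\langle V,E\rangle$, $V\subseteq Lb$, reflexively and transitively closed; $G\le G'$ iff $G\supseteq G'$; $G<G'$ iff $G\le G'$ and $G\ne G'$; $G*G'=(G\cup G')^*$, $G\cdot G'$ is the closure of the graph with vertices $V\cup V'$ and edges $E\cup E'\cup(V\times V')$. Causal values are down-sets of causal graphs; $*$ is intersection, $+$ union, $U\cdot U'={\downarrow}\{G\cdot G'\mid G\in U,G'\in U'\}$; label $l$ denotes ${\downarrow}$ of the graph with single edge $(l,l)$, and $1$ the set of all causal graphs. A rule is $t:H\leftarrow B_1,\dots,B_n$ with $t\in Lb\cup\{1\}$; a positive program has no default negation; a program is completely labelled if every rule has a label in $Lb$ and no two rules share a label. A causal interpretation $I$ (atoms to causal values) is a model of positive $P$ iff $(I(B_1)*\dots*I(B_n))\cdot t\subseteq I(H)$ for every rule; the least model exists. A proof of atom $p$ w.r.t. $P$ is a derivation tree $\pi(p)=\frac{\pi(B_1)\ \cdots\ \pi(B_n)}{p}(R)$ with $R\in P$, head $p$ and body $\{B_1,\dots,B_n\}$ (antecedent $\top$ when $n=0$). For a completely labelled program, $\mathrm{graph}(\pi)$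 is the reflexive–transitive closure of the graph whose vertices are the labels of all rules used in $\pi$ and which contains, for each sub-derivation using rule $R$ with label $m$ and immediate subproofs $\pi(B_i)$ whose last rule has label $l_i$, the edge $(l_i,m)$. A proof $\pi$ of $p$ is redundant if there is another proof $\pi'$ of $p$ with $\mathrm{graph}(\pi)<\mathrm{graph}(\pi')$; otherwise it is non-redundant. *)

(* Defs.v *)
From Stdlib Require Import List Relations.
Import ListNotations.
Set Implicit Arguments.

Section Causal.
Variables (L : Type) (A : Type) .

Definition graph : Type := ((L -> Prop) * (L -> L -> Prop))%type.
Definition gV (G : graph) : L -> Prop := fst G.
Definition gE (G : graph) : L -> L -> Prop := snd G.

Definition rtclos (G : graph) : graph :=
  (gV G, fun x y => (x = y /\ gV G x) \/ clos_trans L (gE G) x y).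

Definition causal_graph (G : graph) : Prop :=
  (forall x y, gE G x y -> gV G x /\ gV G y) /\
  (forall x, gV G x -> gE G x x) /\
  (forall x y z, gE G x y -> gE G y z -> gE G x z).

(* G <= G'  iff  G is a supergraph of G' *)
Definition gle (G G' : graph) : Prop :=
  (forall x, gV G' x -> gV G x) /\ (forall x y, gE G' x y -> gE G x y).
Definition geq (G G' : graph) : Prop := gle G G' /\ gle G' G.
Definition glt (G G' : graph) : Prop := gle G G' /\ ~ geq G G'.

Definition gprod (G G' : graph) : graph :=
  rtclos (fun x => gV G x \/ gV G' x,
          fun x y => gE G x y \/ gE G' x y \/ (gV G x /\ gV G' y)).

Definition cvalue : Type := graph -> Prop.

Definition is_cvalue (U : cvalue) : Prop :=
  (forall G, U G -> causal_graph G) /\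
  (forall G G', U G' -> causal_graph G -> gle G G' -> U G).

Definition down (S : graph -> Prop) : cvalue :=
  fun G => causal_graph G /\ exists G', S G' /\ gle G G'.

Definition cv_one : cvalue := causal_graph.
Definition cv_inter (U U' : cvalue) : cvalue := fun G => U G /\ U' G.
Definition cv_mul (U U' : cvalue) : cvalue :=
  down (fun G => exists G1 G2, U G1 /\ U' G2 /\ geq G (gprod G1 G2)).

Definition single (l : L) : graph := (fun x => x = l, fun x y => x = l /\ y = l).
Definition cv_label (l : L) : cvalue := down (fun G => geq G (single l)).

(* a rule  t : H <- B1, ..., Bn ;  label None stands for 1 *)
Record rule : Type := Rule { rlab : option L; rhead : A; rbody : list A }.
Definition program : Type := rule -> Prop.

Definition term_value (t : option L) : cvalue :=
  match t with None => cv_one | Some l => cv_label l end.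

Definition completely_labelled (P : program) : Prop :=
  (forall R, P R -> exists l, rlab R = Some l) /\
  (forall R R', P R -> P R' -> rlab R = rlab R' -> R = R').

Definition cinterp : Type := A -> cvalue.
Definition is_cinterp (I : cinterp) : Prop := forall a, is_cvalue (I a).

Definition body_value (I : cinterp) (B : list A) : cvalue :=
  fold_right (fun b U => cv_inter (I b) U) cv_one B.

Definition is_model (P : program) (I : cinterp) : Prop :=
  forall R, P R -> forall G,
    cv_mul (body_value I (rbody R)) (term_value (rlab R)) G -> I (rhead R) G.

Definition least_model (P : program) (I : cinterp) : Prop :=
  is_cinterp I /\ is_model P I /\
  forall J, is_cinterp J -> is_model P J -> forall a G, I a G -> J a G.

Inductive proof : Type := Node : rule -> list proof -> proof.

Definition root_rule (pi : proof) : rule := match pi with Node R _ => R end.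

Inductive is_proof (P : program) : A -> proof -> Prop :=
| is_proof_node : forall R subs,
    P R -> Forall2 (is_proof P) (rbody R) subs ->
    is_proof P (rhead R) (Node R subs).

Inductive subproof : proof -> proof -> Prop :=
| subproof_refl : forall pi, subproof pi pi
| subproof_child : forall s pi R subs,
    In pi subs -> subproof s pi -> subproof s (Node R subs).

Definition proof_graph (pi : proof) : graph :=
  rtclos (fun x => exists s, subproof s pi /\ rlab (root_rule s) = Some x,
          fun x y => exists R subs s, subproof (Node R subs) pi /\ In s subs /\
                     rlab (root_rule s) = Some x /\ rlab R = Some y).

Definition non_redundant (P : program) (a : A) (pi : proof) : Prop :=
  is_proof P a pi /\
  ~ (exists pi', is_proof P a pi' /\ glt (proof_graph pi) (proof_graph pi')).

Definition maximal_in (U : cvalue) (G : graph) : Prop :=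
  U G /\ forall G', U G' -> ~ glt G G'.

End Causal.

(* Main.v *)
Require Import Defs.
From Stdlib Require Import List Relations Classical.
Import ListNotations.

Section Aux.
Variables L A : Type.

Lemma gle_refl (G : graph L) : gle G G.
Proof. split; auto. Qed.

Lemma gle_trans (G1 G2 G3 : graph L) : gle G1 G2 -> gle G2 G3 -> gle G1 G3.
Proof. intros [a b] [c d]; split; auto. Qed.

Lemma glt_le_lt (a b c : graph L) : gle a b -> glt b c -> glt a c.
Proof.
  intros H [H1 H2]; split. eapply gle_trans; eauto.
  intros [_ H3]. apply H2. split; auto. eapply gle_trans; eauto.
Qed.

Lemma glt_lt_le (a b c : graph L) : glt a b -> gle b c -> glt a c.
Proof.
  intros [H1 H2] H; split. eapply gle_trans; eauto.
  intros [_ H3]. apply H2. split; auto. eapply gle_trans; eauto.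
Qed.

Lemma rtclos_causal (G : graph L) :
  (forall x y, gE G x y -> gV G x /\ gV G y) -> causal_graph (rtclos G).
Proof.
  intros HE. unfold rtclos, causal_graph, gE, gV in *; simpl.
  split; [|split].
  - intros x y [[-> Hx]|Ht]; auto.
    induction Ht as [x y Hxy|x y z _ [IH1 _] _ [_ IH2]]; auto.
  - intros x Hx; left; auto.
  - intros x y z [[-> Hx]|Ht1] [[-> Hy]|Ht2]; auto.
    right; eapply t_trans; eauto.
Qed.

Lemma rtclos_incl (K G : graph L) : causal_graph K ->
  (forall x, gV G x -> gV K x) -> (forall x y, gE G x y -> gE K x y) ->
  gle K (rtclos G).
Proof.
  intros [HK1 [HK2 HK3]] HV HE. split.
  - exact HV.
  - intros x y [[-> Hx]|Ht]. apply HK2, HV, Hx.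
    induction Ht; eauto.
Qed.

Lemma subproof_trans (a b c : proof L A) : subproof a b -> subproof b c -> subproof a c.
Proof.
  intros H1 H2; induction H2; auto. eapply subproof_child; eauto.
Qed.

Lemma proof_graph_causal (pi : proof L A) : causal_graph (proof_graph pi).
Proof.
  apply rtclos_causal. simpl. intros x y (R & subs & s & Hs & Hin & Hx & Hy).
  split.
  - exists s; split; auto. eapply subproof_trans; [|exact Hs].
    eapply subproof_child; eauto. constructor.
  - exists (Node R subs); split; auto.
Qed.

Lemma subproof_mono (s pi : proof L A) : subproof s pi ->
  gle (proof_graph pi) (proof_graph s).
Proof.
  intros Hs. apply rtclos_incl. apply proof_graph_causal.
  - simpl. intros x (s' & H1 & H2). exists s'; split; auto. eapply subproof_trans; eauto.
  - simpl. intros x y (R & subs & s' & H1 & H2 & H3 & H4). right. apply t_step.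
    exists R, subs, s'; repeat split; auto. eapply subproof_trans; eauto.
Qed.

Lemma child_sub (s : proof L A) R subs : In s subs -> subproof s (Node R subs).
Proof. intros H; eapply subproof_child; eauto; constructor. Qed.

Lemma Forall2_In_r {X Y} (Rel : X -> Y -> Prop) l1 l2 y :
  Forall2 Rel l1 l2 -> In y l2 -> exists x, In x l1 /\ Rel x y.
Proof.
  induction 1; simpl; [tauto|]. intros [->|H1]; eauto.
  destruct (IHForall2 H1) as (x' & ? & ?); eauto.
Qed.

Lemma proof_rules (P : program L A) a pi : is_proof P a pi ->
  forall s, subproof s pi -> P (root_rule s).
Proof.
  intros Hp s Hs. revert a Hp. induction Hs; intros a Hp.
  - inversion Hp; auto.
  - inversion Hp; subst. destruct (Forall2_In_r _ _ _ _ H4 H) as (b & _ & Hb). eauto.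
Qed.

Lemma reach (s pi : proof L A) : subproof s pi ->
  (forall s', subproof s' pi -> exists l, rlab (root_rule s') = Some l) ->
  forall x l, rlab (root_rule s) = Some x -> rlab (root_rule pi) = Some l ->
  gE (proof_graph pi) x l.
Proof.
  intros Hs. induction Hs as [pi|s pi R subs Hin Hs IH]; intros Hlab x l Hx Hl.
  - rewrite Hx in Hl; injection Hl as ->. apply proof_graph_causal.
    exists pi; split; auto. constructor.
  - destruct (Hlab pi (child_sub _ _ _ Hin)) as [y Hy].
    assert (E1 : gE (proof_graph (Node R subs)) x y).
    { apply (subproof_mono _ _ (child_sub _ R subs Hin)). apply IH; auto.
      intros s' Hs'. apply Hlab. eapply subproof_trans; eauto. apply child_sub; auto. }
    assert (E2 : gE (proof_graph (Node R subs)) y l).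
    { simpl. right. apply t_step. exists R, subs, pi. repeat split; auto. constructor. }
    destruct (proof_graph_causal (Node R subs)) as (_ & _ & T). eauto.
Qed.

Definition proof_ind' (Q : proof L A -> Prop)
  (f : forall R subs, Forall Q subs -> Q (Node R subs)) : forall pi, Q pi :=
  fix F pi := match pi with
  | Node R subs => f R subs ((fix go l : Forall Q l := match l with
                    | [] => Forall_nil _ | x :: l' => Forall_cons _ (F x) (go l') end) subs)
  end.

Definition Jint (P : program L A) : cinterp L A := fun a G =>
  causal_graph G /\ exists pi, is_proof P a pi /\ gle G (proof_graph pi).

Lemma single_causal (l : L) : causal_graph (single l).
Proof.
  unfold single, causal_graph, gE, gV; simpl. split; [|split]; intros; firstorder.
Qed.

Lemma proofs_in_I (P : program L A) (I : cinterp L A) :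
  completely_labelled P -> is_cinterp I -> is_model P I ->
  forall pi a, is_proof P a pi -> I a (proof_graph pi).
Proof.
  intros HCL HI HM. apply (proof_ind' (fun pi => forall a, is_proof P a pi -> I a (proof_graph pi))).
  intros R subs HF a Hp. inversion Hp as [R0 subs0 HPR HF2]; subst.
  set (pi := Node R subs).
  destruct (proj1 HCL R HPR) as [l Hl].
  apply (HM R HPR). split. apply proof_graph_causal.
  exists (gprod (proof_graph pi) (single l)). split.
  - exists (proof_graph pi), (single l). split; [|split].
    + assert (Hsub : forall s, In s subs -> gle (proof_graph pi) (proof_graph s))
        by (intros; apply subproof_mono, child_sub; auto).
      assert (Hc := proof_graph_causal pi).
      generalize (proof_graph pi) Hsub Hc. clear -HI HF2 HF.
      induction HF2; intros Gt Hsub Hc; simpl; auto.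
      inversion HF; subst. split.
      * apply (proj2 (HI x) Gt (proof_graph y)); auto. apply Hsub; simpl; auto.
      * apply IHHF2; auto. intros; apply Hsub; simpl; auto.
    + rewrite Hl. simpl. split. apply single_causal. exists (single l); split; split; apply gle_refl.
    + split; apply gle_refl.
  - assert (Hlab : forall s', subproof s' pi -> exists l, rlab (root_rule s') = Some l).
    { intros s' Hs'. apply (proj1 HCL). eapply proof_rules; eauto. }
    apply rtclos_incl. apply proof_graph_causal.
    + simpl. intros x [Hx| ->]; auto. exists pi; split; [constructor|auto].
    + simpl. intros x y [Hxy|[[-> ->]|[(s & Hs & Hx) ->]]].
      * auto.
      * apply proof_graph_causal. exists pi; split; [constructor|auto].
      * apply (reach _ _ Hs); auto.
Qed.

Lemma J_model (P : program L A) : completely_labelled P -> is_model P (Jint P).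
Proof.
  intros HCL R HPR G [HG (G' & (G1 & G2 & HB & HL & Heq) & HGG')].
  destruct (proj1 HCL R HPR) as [l Hl]. rewrite Hl in HL.
  destruct HL as [HG2 (G3 & [H3 _] & H23)].
  assert (Hsubs : exists subs, Forall2 (is_proof P) (rbody R) subs /\
            forall s, In s subs -> gle G1 (proof_graph s)).
  { clear -HB. induction (rbody R) as [|b bs IH]; simpl in HB.
    - exists []; split; [constructor|simpl; tauto].
    - destruct HB as [[_ (pi & Hp & Hle)] HB]. destruct (IH HB) as (subs & H1 & H2).
      exists (pi :: subs); split; [constructor; auto|]. simpl; intros s [<-|Hs]; auto. }
  assert (HG1 : causal_graph G1).
  { clear -HB. induction (rbody R); simpl in HB. exact HB. apply IHl, HB. }
  destruct Hsubs as (subs & HF & Hle).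
  split; auto. exists (Node R subs). split. constructor; auto.
  eapply gle_trans; [exact HGG'|]. eapply gle_trans; [apply Heq|].
  assert (Vl : gV G2 l). { apply H23, H3. reflexivity. }
  apply rtclos_incl.
  - apply rtclos_causal. simpl. destruct HG1 as [C1 _]. destruct HG2 as [C2 _].
    intros x y [E|[E|[E1 E2]]]; auto.
    destruct (C1 _ _ E); auto. destruct (C2 _ _ E); auto.
  - simpl. intros x (s & Hs & Hx). inversion Hs; subst.
    + simpl in Hx. rewrite Hl in Hx. injection Hx as ->. auto.
    + left. match goal with H: In ?q subs |- _ => apply (Hle q H) end. simpl. exists s; auto.
  - simpl. intros x y (R' & subs' & s & Hs & Hin & Hx & Hy). right.
    inversion Hs; subst.
    + apply t_step. right; right. split.
      * apply (Hle s Hin). simpl. exists s; split; [constructor|auto].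
      * rewrite Hl in Hy; injection Hy as ->; auto.
    + apply t_step. left. match goal with H: In ?q subs |- _ => apply (Hle q H) end. simpl. right. apply t_step.
      exists R', subs', s. auto.
Qed.

Lemma J_cinterp (P : program L A) : is_cinterp (Jint P).
Proof.
  intros a. split. intros G [H _]; auto.
  intros G G' [_ (pi & Hp & Hle)] HG Hle'. split; auto. exists pi; split; auto.
  eapply gle_trans; eauto.
Qed.

End Aux.

Theorem theorem3 (L A : Type) (P : program L A) (p : A) (I : cinterp L A) :
  completely_labelled P -> least_model P I ->
  forall G : graph L, causal_graph G ->
    ((exists pi, non_redundant P p pi /\ geq G (proof_graph pi)) <->
     maximal_in (I p) G).
Proof.
  intros HCL [HI [HM Hleast]] G HG.
  assert (Hin : forall a pi, is_proof P a pi -> I a (proof_graph pi))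
    by (intros; eapply proofs_in_I; eauto).
  assert (HJ : forall a G, I a G -> @Jint L A P a G)
    by (intros; eapply Hleast; eauto using J_cinterp, J_model).
  split.
  - intros (pi & [Hp Hnr] & [Hle1 Hle2]). split.
    + apply (proj2 (HI p) G (proof_graph pi)); auto.
    + intros G' HG' Hlt. destruct (HJ _ _ HG') as [_ (pi' & Hp' & Hle')].
      apply Hnr. exists pi'. split; auto.
      eapply glt_le_lt; [exact Hle2|]. eapply glt_lt_le; eauto.
  - intros [HIG Hmax]. destruct (HJ _ _ HIG) as [_ (pi & Hp & Hle)].
    assert (Hgeq : geq G (proof_graph pi)).
    { split; auto. destruct (Classical_Prop.classic (gle (proof_graph pi) G)) as [H|H]; auto.
      exfalso. apply (Hmax (proof_graph pi)); auto. split; auto. intros [_ H']; auto. }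
    exists pi. split; auto. split; auto.
    intros (pi' & Hp' & Hlt). apply (Hmax (proof_graph pi')); auto.
    eapply glt_le_lt; [apply Hgeq|exact Hlt].
Qed.
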